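(* The Collatz conjecture (for every $n\in\mathbb{N}$ there exists $k\in\mathbb{N}_0$ with $T^{(k)}(n)=1$) holds if and only if every natural number $n\notin\{1,2,4\}$ can be represented in the form $n=\frac{2^m}{3^l}-\sum_{k=1}^{l}\frac{2^{b_k}}{3^k}$ for some $m,l,b_1,\dots,b_l\in\mathbb{N}_0$ with $0\leq l\leq m-3$ and $0\leq b_1<b_2<\cdots<b_l\leq m-4$.
   Context: $\mathbb{N}=\{1,2,3,\dots\}$, $\mathbb{N}_0=\mathbb{N}\cup\{0\}$. The Collatz map $T:\mathbb{N}\to\mathbb{N}$ is $T(n)=\frac{3n+1}{2}$ if $n$ is odd and $T(n)=\frac{n}{2}$ if $n$ is even; $T^{(k)}$ denotes the $k$-fold composition ($T^{(0)}$ the identity). For $l=0$ the sum is empty. *)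

(* Defs.v *)
From mathcomp Require Import all_boot all_order all_algebra.
Set Implicit Arguments. Unset Strict Implicit. Unset Printing Implicit Defensive.

Definition T (n : nat) : nat := if odd n then (3 * n + 1)./2 else n./2.

(* Main.v *)
Require Import Defs.
From mathcomp Require Import all_boot all_order all_algebra zify ring.
Import GRing.Theory Num.Theory.

Definition S (l : nat) (b : nat -> nat) : nat := \sum_(1 <= k < l.+1) 2^(b k) * 3^(l-k).
Definition reach n := exists k, iter k T n = 1.

Lemma reach_back x : reach (T x) -> reach x.
Proof. by case=> k hk; exists k.+1; rewrite iterSr. Qed.

Lemma reach_fwd x : x != 1 -> reach x -> reach (T x).
Proof. move=> hx [[|k] hk]; first by move: hk => /= hk; rewrite hk in hx. by exists k; rewrite -iterSr; exact: hk. Qed.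

Lemma S0 b : S 0 b = 0.
Proof. by rewrite /S big_geq. Qed.

Lemma S_double l b : (forall k, 1 <= k <= l -> 0 < b k) ->
  S l b = 2 * S l (fun k => (b k).-1).
Proof.
move=> hb; rewrite /S big_distrr /=; apply: eq_big_nat => k /andP[h1 h2].
have := hb k; rewrite h1 -ltnS h2 => /(_ isT) hk.
by rewrite -{1}(prednK hk) expnS mulnA.
Qed.

Lemma S_shift l b : S l (fun k => (b k).+1) = 2 * S l b.
Proof. by rewrite /S big_distrr /=; apply: eq_big_nat => k _; rewrite expnS mulnA. Qed.

Lemma S_recl l b : S l.+1 b = 2^(b 1) * 3^l + S l (fun k => b k.+1).
Proof.
by rewrite /S big_nat_recl // subn1 /=.
Qed.

Lemma strict_lb l b : (forall k, 1 <= k < l -> b k < b k.+1) ->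
  forall k, 1 <= k <= l -> b 1 + (k - 1) <= b k.
Proof.
move=> hs; elim=> [//|k IH] /andP[h1 h2].
case: k IH h1 h2 => [|k] IH h1 h2; first lia.
have := hs k.+1; have := IH; lia.
Qed.

Lemma reach_pow m : reach (2^m).
Proof.
elim: m => [|m IH]; first by exists 0.
apply: reach_back; rewrite /T expnS oddM /= mul2n doubleK. exact: IH.
Qed.

Lemma back m : forall l b n, 0 < n -> (forall k, 1 <= k < l -> b k < b k.+1) ->
  n * 3^l + S l b = 2^m -> reach n.
Proof.
elim: m => [|m IHm] l b n hn hs he.
  have h3 : 0 < 3^l by rewrite expn_gt0.
  have -> : n = 1 by move: he; rewrite expn0; nia.
  by exists 0.
elim: l b n hn hs he => [|l IHl] b n hn hs he.
  by move: he; rewrite S0 expn0 muln1 addn0 => ->; apply: reach_pow.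
have hlb := @strict_lb _ _ hs.
case: (posnP (b 1)) => hb1.
-
  have hpos : forall k, 1 <= k <= l -> 0 < b k.+1.
    move=> k /andP[k1 k2]; have := hlb k.+1; lia.
  move: he; rewrite S_recl hb1 expn0 mul1n (@S_double _ _ hpos) => he.
  have hodd : odd n.
    have := congr1 odd he; rewrite !oddD !oddM !oddX /=.
    by rewrite ?orbT ?andbT; case: (odd n); case: (odd (S _ _)).
  set S2 := S l _ in he.
  have he2 : (3 * n + 1) * 3^l + 2 * S2 = 2^m.+1.
    rewrite -he expnS; ring.
  have h1 : reach (3 * n + 1).
    apply: (IHl (fun k => b k.+1)) => //; first lia.
    - move=> k /andP[k1 k2]; apply: hs; lia.
    - by rewrite -he2 (@S_double _ _ hpos).
  have hne : (3 * n + 1 != 1) by lia.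
  have := @reach_fwd _ hne h1; rewrite /T oddD oddM hodd /= => h2.
  by apply: reach_back; rewrite /T hodd.
-
  have hpos : forall k, 1 <= k <= l.+1 -> 0 < b k.
    move=> k /andP[k1 k2]; have := hlb k; lia.
  move: he; rewrite (@S_double _ _ hpos) => he.
  have hev : odd n = false.
    have := congr1 odd he; rewrite !oddD !oddM !oddX /=.
    by rewrite ?orbT ?andbT; case: (odd n); case: (odd (S _ _)).
  have hn2 := odd_double_half n; rewrite hev add0n in hn2.
  apply: reach_back; rewrite /T hev.
  apply: (IHm l.+1 (fun k => (b k).-1)).
  + lia.
  + move=> k hk; have := hs k hk; have := hpos k; have := hpos k.+1; lia.
  + move: he; rewrite -{1}hn2 -mul2n (expnS 2 m) -mulnA; set X := S _ _; set Y := _ * 3 ^ _; lia.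
Qed.

Lemma fwd k : forall n, 0 < n -> iter k T n = 1 -> n \notin [:: 1; 2; 4] ->
  exists m l b, [/\ l + 3 <= m, (forall k, 1 <= k < l -> b k < b k.+1),
    (0 < l -> b l + 4 <= m) & n * 3^l + S l b = 2^m].
Proof.
elim: k => [|k IH] n hn hk hnin.
  by move: hk hnin => /= ->.
move: hk; rewrite iterSr => hk.
have hn2 := odd_double_half n.
case hodd: (odd n) hn2 => hn2.
- set j := n./2 in hn2.
  have hT : T n = 3 * j + 2.
    have e : 3 * n + 1 = (3 * j + 2).*2 by rewrite -hn2 -!mul2n /=; lia.
    by rewrite /T hodd e doubleK.
  rewrite hT in hk.
  have hj : 0 < j by move: hnin; rewrite !inE -hn2 -mul2n; lia.
  have hj' : 0 < 3 * j + 2 by lia.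
  have hnin' : (3 * j + 2) \notin [:: 1; 2; 4] by rewrite !inE; lia.
  have [m [l [b [h1 h2 h3 h4]]]] := IH _ hj' hk hnin'.
  exists m.+1, l.+1, (fun k => if k <= 1 then 0 else (b k.-1).+1); split.
  + lia.
  + move=> i /andP[i1 i2]; case: i i1 i2 => [|[|i]] //= i1 i2.
    have := h2 i.+1; lia.
  + move=> _ /=; case: l h1 h2 h3 h4 => [|l] h1 h2 h3 h4 /=; first lia.
    have := h3 isT; lia.
  + rewrite S_recl /= expn0 mul1n.
    have -> : S l (fun k => if k.+1 <= 1 then 0 else (b k.+1.-1).+1) = S l (fun k => (b k).+1).
      rewrite /S; apply: eq_big_nat => i /andP[i1 i2].
      by case: i i1 i2.
    rewrite S_shift -hn2 expnS (expnS 2 m) -h4 -mul2n; rewrite /=; ring.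
- set j := n./2 in hn2.
  rewrite add0n in hn2.
  have hT : T n = j by rewrite /T hodd.
  rewrite hT in hk.
  have hj : 0 < j by rewrite -hn2 in hn; lia.
  case: (boolP (j \in [:: 1; 2; 4])) => hjin.
    exists 3, 0, (fun _ => 0); split => //.
      by move=> i; lia.
    rewrite S0 expn0 muln1 addn0.
    move: hjin hnin; rewrite !inE -hn2 -mul2n; lia.
  have [m [l [b [h1 h2 h3 h4]]]] := IH _ hj hk hjin.
  exists m.+1, l, (fun k => (b k).+1); split.
  + lia.
  + move=> i hi; have := h2 i hi; lia.
  + move=> hl; have := h3 hl; lia.
  + rewrite S_shift -hn2 (expnS 2 m) -h4 -mul2n; ring.
Qed.

Lemma S_rat l b : ((S l b)%:R : rat) =
  (((\sum_(1 <= k < l.+1) 2%:R ^+ (b k) / 3%:R ^+ k) * 3%:R ^+ l)%R)%R.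
Proof.
rewrite /S natr_sum mulr_suml; apply: eq_big_nat => k /andP[k1 k2].
rewrite natrM !natrX.
have -> : ((3%:R : rat) ^+ l = 3%:R ^+ (l - k) * 3%:R ^+ k)%R by rewrite -exprD subnK.
have h : ((3%:R : rat) ^+ k != 0)%R by rewrite expf_eq0 pnatr_eq0 andbF.
field; exact: h.
Qed.

Lemma rat_rep n m l b : (n%:R : rat) = (2%:R ^+ m / 3%:R ^+ l
        - \sum_(1 <= k < l.+1) 2%:R ^+ (b k) / 3%:R ^+ k)%R <->
  n * 3^l + S l b = 2^m.
Proof.
have h : ((3%:R : rat) ^+ l != 0)%R by rewrite expf_eq0 pnatr_eq0 andbF.
split => H.
  apply/eqP; rewrite -(eqr_nat rat) natrD natrM !natrX S_rat H; apply/eqP.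
  field; exact: h.
have := congr1 (fun x => (x%:R : rat)) H; rewrite /= natrD natrM !natrX S_rat => H2.
apply: (mulIf h); rewrite mulrBl -H2; field; exact: h.
Qed.

Theorem mainTheorem4 :
  (forall n : nat, 0 < n -> exists k : nat, iter k T n = 1)
  <->
  (forall n : nat, 0 < n -> n \notin [:: 1; 2; 4] ->
     exists (m l : nat) (b : nat -> nat),
       [/\ l + 3 <= m,
           (forall k, 1 <= k < l -> b k < b k.+1),
           (0 < l -> b l + 4 <= m) &
           (n%:R : rat) = (2%:R ^+ m / 3%:R ^+ l
                           - \sum_(1 <= k < l.+1) 2%:R ^+ (b k) / 3%:R ^+ k)%R]).
Proof.
split=> H n hn.
  move=> hnin; have [k hk] := H n hn.
  have [m [l [b [h1 h2 h3 h4]]]] := @fwd k n hn hk hnin.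
  by exists m, l, b; split => //; apply/rat_rep.
case: (boolP (n \in [:: 1; 2; 4])).
  by rewrite !inE => /or3P [] /eqP ->; [exists 0 | exists 1 | exists 2].
move=> hnin; have [m [l [b [h1 h2 h3 h4]]]] := H n hn hnin.
exact: (@back m l b n hn h2 (proj1 (rat_rep _ _ _ _) h4)).
Qed.
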